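(* Let $(E,\mathscr{T},\le)$ be a locally compact $T_2$-preordered Tychonoff space with $G(\le)=\bigcap_{f\in\mathcal{F}}G_f$, and let $\mathcal{H}\subseteq\mathcal{F}$ with $G(\le)=\bigcap_{h\in\mathcal{H}}G_h$. Then the $\mathcal{H}$-compactification and the $i(\mathcal{H})$-compactification are equivalent.
   Context: $T_2$-preordered: the graph $G(\le)=\{(x,y):x\le y\}$ is closed in $E\times E$. $\mathcal{F}$ is the family of continuous isotone functions $f:E\to[0,1]$; $G_f=\{(x,y):f(x)\le f(y)\}$. $\mathcal{C}$ is the family of continuous functions $E\to[0,1]$ constant outside a compact set. For $\mathcal{H}\subseteq\mathcal{F}$ with $G(\le)=\bigcap_{h\in\mathcal{H}}G_h$, the $\mathcal{H}$-compactification is $c:E\to[0,1]^{\mathcal{H}\cup\mathcal{C}}$, $c(x)=(g(x))_{g\in\mathcal{H}\cup\mathcal{C}}$, with $cE$ the closure of $c(E)$, induced product topology, and preorder $x\le_c y$ iff $x_h\le y_h$ for all $h\in\mathcal{H}$. $i(\mathcal{H})$ denotes the set of $f\in\mathcal{F}$ such that $f\circ c^{-1}:c(E)\to[0,1]$ extends to a continuous isotone function on $(cE,\le_c)$, where $c$ is the $\mathcal{H}$-compactification (so $\mathcal{H}\subseteq i(\mathcal{H})$ and $i(\mathcal{H})$ also represents $\le$). For preorder compactifications, $c_1\le c_2$ means there is a continuous isotone $C:c_2E\to c_1E$ with $C\circ c_2=c_1$; equivalent means $c_1\le c_2$ and $c_2\le c_1$. *)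

(* Defs.v *)
From HB Require Import structures.
From mathcomp Require Import all_boot all_order all_algebra.
From mathcomp Require Import all_classical all_reals all_analysis.
Unset Printing Implicit Defensive.
Import Order.TTheory GRing.Theory Num.Theory numFieldNormedType.Exports.
Local Open Scope classical_set_scope.
Local Open Scope ring_scope.

Section PreorderCompactification.
Context {R : realType} {E : topologicalType}.

Definition loc_compact : Prop :=
  forall x : E, exists K : set E, compact K /\ nbhs x K.

Definition is_preorder (le : E -> E -> Prop) : Prop :=
  (forall x, le x x) /\ (forall x y z, le x y -> le y z -> le x z).

Definition graph (le : E -> E -> Prop) : set (E * E) :=
  [set xy | le xy.1 xy.2].

Definition T2_preordered (le : E -> E -> Prop) : Prop := closed (graph le).

Definition unit_valued (f : E -> R) : Prop := forall x, 0 <= f x <= 1.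

Definition famF (le : E -> E -> Prop) : set (E -> R) :=
  [set f : E -> R | continuous (f : E -> R) /\ unit_valued f /\ (forall x y, le x y -> f x <= f y)].

Definition graphf (f : E -> R) : set (E * E) := [set xy | f xy.1 <= f xy.2].

Definition represents (le : E -> E -> Prop) (H : set (E -> R)) : Prop :=
  graph le = \bigcap_(h in H) graphf h.

Definition famC : set (E -> R) :=
  [set g : E -> R | continuous (g : E -> R) /\ unit_valued g /\
     exists K : set E, compact K /\ exists a : R, forall x, ~ K x -> g x = a].

Definition idx (H : set (E -> R)) : Type := {g : E -> R | (H `|` famC) g}.

(* the H-compactification map c : E -> [0,1]^(H \cup C) (product topology) *)
Definition cmap (H : set (E -> R)) : E -> {ptws idx H -> R} :=
  fun x => fun g => proj1_sig g x.

Definition cE (H : set (E -> R)) : set {ptws idx H -> R} := closure [set cmap H x | x in [set: E]].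

Definition le_c (H : set (E -> R)) (p q : {ptws idx H -> R}) : Prop :=
  forall g : idx H, H (proj1_sig g) -> p g <= q g.

Definition compactification_le (H1 H2 : set (E -> R)) : Prop :=
  exists Cm : {ptws idx H2 -> R} -> {ptws idx H1 -> R},
    [/\ {within cE H2, continuous Cm},
        (forall p, cE H2 p -> cE H1 (Cm p)),
        (forall p q, cE H2 p -> cE H2 q -> le_c H2 p q -> le_c H1 (Cm p) (Cm q)) &
        (forall x, Cm (cmap H2 x) = cmap H1 x)].

Definition compactification_equiv (H1 H2 : set (E -> R)) : Prop :=
  compactification_le H1 H2 /\ compactification_le H2 H1.

(* i(H): f in F such that f o c^{-1} : c(E) -> [0,1] extends to a continuous
   isotone function (cE, <=_c) -> [0,1] *)
Definition iH (le : E -> E -> Prop) (H : set (E -> R)) : set (E -> R) :=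
  [set f : E -> R | famF le f /\
     exists phi : {ptws idx H -> R} -> R,
       [/\ {within cE H, continuous phi},
           (forall p, cE H p -> 0 <= phi p <= 1),
           (forall p q, cE H p -> cE H q -> le_c H p q -> phi p <= phi q) &
           (forall x, phi (cmap H x) = f x)]].

End PreorderCompactification.

(* Main.v *)
Require Import Defs.
From HB Require Import structures.
From mathcomp Require Import all_boot all_order all_algebra.
From mathcomp Require Import all_classical all_reals all_analysis.
Import Order.TTheory GRing.Theory Num.Theory numFieldNormedType.Exports.
Local Open Scope classical_set_scope.
Local Open Scope ring_scope.

Lemma coord_cont (R : realType) (I : Type) (i : I) :
  continuous (fun p : {ptws I -> R} => (p i : R)).
Proof. exact: (@proj_continuous {classic I} (fun _ => R) i). Qed.

Lemma ptws_cvg (R : realType) (T : Type) (I : Type) (F : set_system T)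
  (f : T -> {ptws I -> R}) (p : {ptws I -> R}) :
  Filter F -> (forall i, (fun q => f q i) @ F --> p i) -> f @ F --> p.
Proof.
move=> FF h; apply/cvg_sup => i; apply/cvg_image => //.
  by rewrite eqEsubset; split => // y _; exists (fun _ => y).
move=> B /h /= FB; exists ((fun q : {ptws I -> R} => q i) @^-1` B).
  exact: FB.
by rewrite image_preimage //; rewrite eqEsubset; split => // y _; exists (fun _ => y).
Qed.

Lemma cont_closure_image {X Y : topologicalType} (A : set X) (f : X -> Y) :
  {within closure A, continuous f} ->
  forall p, closure A p -> closure (f @` A) (f p).
Proof.
move=> cf p cp B nB.
have := (subspace_continuousP _ _).1 cf p cp B nB.
rewrite /= nbhs_simpl /within /= => nW.
have [x [Ax Bx]] := cp _ nW.
exists (f x); split; first by exists x.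
exact: Bx (subset_closure Ax).
Qed.

Arguments cont_closure_image {X Y A f}.

Section Aux.
Context {R : realType} {E : topologicalType} (le : E -> E -> Prop)
  (H : set (E -> R)).

Definition phi_of (f : E -> R) : {ptws idx H -> R} -> R :=
  match pselect (iH le H f) with
  | left Hf => projT1 (cid (proj2 Hf))
  | right _ => fun _ => 0
  end.

Lemma phi_ofP f : iH le H f ->
  [/\ {within cE H, continuous (phi_of f)},
      (forall p, cE H p -> 0 <= phi_of f p <= 1),
      (forall p q, cE H p -> cE H q -> le_c H p q -> phi_of f p <= phi_of f q) &
      (forall x, phi_of f (cmap H x) = f x)].
Proof.
move=> Hf0; rewrite /phi_of; case: pselect => // Hf.
exact: projT2 (cid (proj2 Hf)).
Qed.

Lemma liftC_prf (g : idx (iH le H)) :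
  ~ iH le H (proj1_sig g) -> (H `|` famC) (proj1_sig g).
Proof. by case: g => f [//|c] /= _; right. Qed.

Definition Cm2 (p : {ptws idx H -> R}) : {ptws idx (iH le H) -> R} :=
  fun g => match pselect (iH le H (proj1_sig g)) with
  | left _ => phi_of (proj1_sig g) p
  | right nH => p (exist _ (proj1_sig g) (liftC_prf g nH))
  end.

Lemma Cm2_iH p (g : idx (iH le H)) : iH le H (proj1_sig g) ->
  Cm2 p g = phi_of (proj1_sig g) p.
Proof. by move=> Hg; rewrite /Cm2; case: pselect. Qed.

End Aux.

Theorem mainTheorem14 (R : realType) (E : topologicalType) (le : E -> E -> Prop)
  (H : set (E -> R)) :
  loc_compact (E := E) ->
  hausdorff_space E -> completely_regular_space E ->
  is_preorder le -> T2_preordered le ->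
  represents le (famF (R := R) le) ->
  H `<=` famF le -> represents le H ->
  compactification_equiv H (iH le H).
Proof.
move=> _ _ _ _ _ _ HF _.
have subH : H `<=` iH le H.
  move=> h Hh; split; first exact: HF.
  pose g0 : idx H := exist _ h (or_introl Hh).
  exists (fun p => p g0); split.
  - apply: continuous_subspaceT; exact: coord_cont.
  - move=> p; rewrite /cE.
    have cl : closed [set q : {ptws idx H -> R} | 0 <= q g0 <= 1].
      have -> : [set q : {ptws idx H -> R} | 0 <= q g0 <= 1] =
        (fun q : {ptws idx H -> R} => q g0) @^-1` ([set x : R | 0 <= x] `&` [set x : R | x <= 1]).
        by rewrite eqEsubset; split => q /=; [move/andP|case=> -> ->].
      apply: preimage_closed; first by move=> q _; exact: coord_cont.
      by apply: closedI; [exact: closed_ge|exact: closed_le].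
    move/(closureS (B := [set q : {ptws idx H -> R} | 0 <= q g0 <= 1])).
    rewrite -(closure_id _).1 //; apply.
    by move=> _ [x _ <-]; have [_ [/(_ x) + _]] := HF _ Hh.
  - by move=> p q _ _ /(_ g0 Hh).
  - by [].
have liftP (f : E -> R) : (H `|` famC) f -> (iH le H `|` famC) f.
  by case=> [/subH|]; [left|right].
split.
- pose Cm (p : {ptws idx (iH le H) -> R}) : {ptws idx H -> R} :=
    fun g => p (exist _ (proj1_sig g) (liftP _ (proj2_sig g))).
  have Cmc : continuous Cm.
    move=> p; apply: (@ptws_cvg R _ _ (nbhs p) Cm (Cm p)).
    move=> g; exact: (coord_cont R _ _ p).
  have cw : {within cE (iH le H), continuous Cm} by exact: continuous_subspaceT.
  exists Cm; split.
  + exact: cw.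
  + move=> p cp; have := cont_closure_image cw _ cp.
    apply: closureS => _ [_ [x _ <-] <-]; exists x => //.
  + move=> p q _ _ lpq g Hg; apply: lpq => /=; exact: subH.
  + by [].
- exists (Cm2 le H).
  have Cmc : {within cE H, continuous (Cm2 le H)}.
    apply/subspace_continuousP => p cp.
    apply: (@ptws_cvg R _ _ (within (cE H) (nbhs p)) (Cm2 le H) (Cm2 le H p)) => g.
    rewrite /Cm2; case: pselect => [Hg|nH].
      have [cphi _ _ _] := phi_ofP le H _ Hg.
      exact: (subspace_continuousP _ _).1 cphi p cp.
    have := coord_cont R _ (exist _ (sval g) (liftC_prf le H g nH)) p.
    apply: cvg_trans; apply: cvg_app; exact: cvg_within.
  have Cmx x : Cm2 le H (cmap H x) = cmap (iH le H) x.
    apply/funext => g; rewrite /Cm2; case: pselect => [Hg|nH] //.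
    by have [_ _ _ ->] := phi_ofP le H _ Hg.
  split.
  + exact: Cmc.
  + move=> p cp; have := cont_closure_image Cmc _ cp.
    apply: closureS => _ [_ [x _ <-] <-]; exists x => //.
  + move=> p q cp cq lpq g Hg; rewrite (Cm2_iH le H p g Hg) (Cm2_iH le H q g Hg).
    by have [_ _ hm _] := phi_ofP le H _ Hg; apply: hm.
  + exact: Cmx.
Qed.
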